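(* Let $n\ge 3$ and let $B_n(r,q)$ be the generic BMW algebra over $\mathbb{K}=\mathbb{Q}(r,q)$ (defined in the context). For all integers $k,h\ge 0$ and all $1\le i\le n-2$, $$Y_i(k)\,Y_{i+1}(k+h)\,Y_i(h)=Y_{i+1}(h)\,Y_i(k+h)\,Y_{i+1}(k),$$ and for all $k,h\ge 0$ and all $1\le i,j\le n-1$ with $|i-j|>1$, $$Y_i(k)Y_j(h)=Y_j(h)Y_i(k).$$
   Context: Let $r,q$ be indeterminates, $\mathbb{K}=\mathbb{Q}(r,q)$, and $x=1+\frac{r-r^{-1}}{q-q^{-1}}$. The generic BMW algebra $B_n(r,q)$ is the unital associative $\mathbb{K}$-algebra generated by $T_i^{\pm1},E_i$ ($1\le i\le n-1$) subject to: $T_i-T_i^{-1}=(q-q^{-1})(1-E_i)$; $E_i^2=xE_i$; $T_iT_{i+1}T_i=T_{i+1}T_iT_{i+1}$ ($1\le i\le n-2$); $T_iT_j=T_jT_i$ ($|i-j|>1$); $E_iE_{i+1}E_i=E_i$, $E_{i+1}E_iE_{i+1}=E_{i+1}$; $T_iT_{i+1}E_i=E_{i+1}E_i$, $T_{i+1}T_iE_{i+1}=E_iE_{i+1}$; $E_iT_i=T_iE_i=r^{-1}E_i$; $E_iT_{i+1}E_i=rE_i$, $E_{i+1}T_iE_{i+1}=rE_{i+1}$ (with $T_i^{\pm1}$ mutually inverse). For an integer $k\ge0$ let $[k]=\frac{q^k-q^{-k}}{q-q^{-1}}$ (so $[0]=0$), and for $1\le i\le n-1$ define $$Y_i(k)=\frac{-1}{[k+1]}\Big([k]T_i-q^k+\frac{q^k-q^{-k}}{1+rq^{-2k+1}}E_i\Big)\in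 B_n(r,q).$$ *)

(* Defs.v *)
From HB Require Import structures.
From mathcomp Require Import all_boot all_order all_algebra.
Set Implicit Arguments. Unset Strict Implicit. Unset Printing Implicit Defensive.
Import Order.TTheory GRing.Theory Num.Theory.
Local Open Scope ring_scope.

(* K = Q(r,q): the fraction field of Q[q][r]. *)
Definition Kf : fieldType := {fraction {poly {poly rat}}}.

Definition rr : Kf := tofrac ('X : {poly {poly rat}}).
Definition qq : Kf := tofrac ((('X : {poly rat}))%:P : {poly {poly rat}}).

Definition qint (k : nat) : Kf := (qq ^+ k - qq ^- k) / (qq - qq^-1).

Definition xx : Kf := 1 + (rr - rr^-1) / (qq - qq^-1).

(* The defining relations of B_n(r,q), for families T, Ti (= T^-1), E
   indexed by 1 <= i <= n-1 (indices outside this range are unused). *)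
Definition bmw_rel (n : nat) (A : algType Kf) (T Ti E : nat -> A) : Prop :=
  (forall i, (1 <= i <= n.-1)%N ->
     [/\ T i * Ti i = 1, Ti i * T i = 1,
         T i - Ti i = (qq - qq^-1) *: (1 - E i),
         E i * E i = xx *: E i &
         E i * T i = rr^-1 *: E i /\ T i * E i = rr^-1 *: E i]) /\
  (forall i, (1 <= i <= n - 2)%N ->
     [/\ T i * T i.+1 * T i = T i.+1 * T i * T i.+1,
         E i * E i.+1 * E i = E i /\ E i.+1 * E i * E i.+1 = E i.+1,
         T i * T i.+1 * E i = E i.+1 * E i /\ T i.+1 * T i * E i.+1 = E i * E i.+1 &
         E i * T i.+1 * E i = rr *: E i /\ E i.+1 * T i * E i.+1 = rr *: E i.+1]) /\
  (forall i j, (1 <= i <= n.-1)%N -> (1 <= j <= n.-1)%N ->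
     (i.+1 < j)%N || (j.+1 < i)%N -> T i * T j = T j * T i).

Definition Y (A : algType Kf) (T E : nat -> A) (i k : nat) : A :=
  (- (qint k.+1)^-1) *:
    (qint k *: T i - qq ^+ k *: 1
     + ((qq ^+ k - qq ^- k) / (1 + rr * qq ^ (1 - (2 * k)%:Z))) *: E i).

(* Main.v *)
Require Import Defs.
From HB Require Import structures.
From mathcomp Require Import all_boot all_order all_algebra.
From mathcomp Require Import ring zify.
Import GRing.Theory.
Local Open Scope ring_scope.

Inductive lx (K : Type) := LA of nat | LS of K & lx K | LD of lx K & lx K | LN of lx K | LZ.
Arguments LA {K}. Arguments LZ {K}. Arguments LS {K}. Arguments LD {K}. Arguments LN {K}.

Fixpoint ev (K : nzRingType) (V : lmodType K) (w : nat -> V) (t : lx K) : V :=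
  match t with
  | LA j => w j
  | LS c t => c *: ev K V w t
  | LD t1 t2 => ev K V w t1 + ev K V w t2
  | LN t => - ev K V w t
  | LZ => 0
  end.
Arguments ev {K V} w t.

Fixpoint co (K : nzRingType) (t : lx K) (i : nat) : K :=
  match t with
  | LA j => if eqn i j then 1 else 0
  | LS c t => c * co K t i
  | LD t1 t2 => co K t1 i + co K t2 i
  | LN t => - co K t i
  | LZ => 0
  end.
Arguments co {K} t i.

Lemma ev_sum (K : nzRingType) (V : lmodType K) (w : nat -> V) N
  (hw : forall j, (N <= j)%N -> w j = 0) (t : lx K) :
  ev w t = \sum_(i < N) co t i *: w i.
Proof.
elim: t => [j|c t IH|t1 IH1 t2 IH2|t IH|] /=.
- case: (ltnP j N) => hj.
  + rewrite (bigD1 (Ordinal hj)) //= (introT eqnP erefl) scale1r big1 ?addr0 // => i /eqP hi.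
    case: (@eqnP i j) => [hij|_]; last by rewrite scale0r.
    by exfalso; apply: hi; apply: val_inj.
  + rewrite hw // big1 // => i _; case: (@eqnP i j) => [hij|_]; last by rewrite scale0r.
    by move: (ltn_ord i); rewrite hij ltnNge hj.
- by rewrite IH scaler_sumr; apply: eq_bigr => i _; rewrite scalerA.
- by rewrite IH1 IH2 -big_split /=; apply: eq_bigr => i _; rewrite scalerDl.
- by rewrite IH -sumrN; apply: eq_bigr => i _; rewrite scaleNr.
- by rewrite big1 // => i _; rewrite scale0r.
Qed.

Lemma ev_eq (K : nzRingType) (V : lmodType K) (w : nat -> V) N
  (hw : forall j, (N <= j)%N -> w j = 0) (t1 t2 : lx K) :
  (forall i, (i < N)%N -> co t1 i = co t2 i) -> ev w t1 = ev w t2.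
Proof.
move=> h; rewrite !(@ev_sum _ _ _ _ hw); apply: eq_bigr => i _; by rewrite h.
Qed.

Ltac find_idx t l := lazymatch l with
  | cons ?x ?l' =>
    let b := constr:(ltac:(first [ unify t x; exact true | exact false ]) : bool) in
    lazymatch b with
    | true => constr:(0%N)
    | false => let n := find_idx t l' in constr:(S n) end end.

Ltac reifyl K l t := lazymatch t with
 | ?x + ?y => let u := reifyl K l x in let v := reifyl K l y in constr:(LD u v)
 | - ?x => let u := reifyl K l x in constr:(LN u)
 | ?c *: ?x => let u := reifyl K l x in constr:(LS c u)
 | 0 => constr:(@LZ K)
 | _ => let n := find_idx t l in constr:(@LA K n)
 end.

Ltac cases_lin l solver := lazymatch l with
 | nil => by move=> ?; rewrite !ltnS ltn0
 | cons _ ?l' => case=> [|]; [move=> _; cbv beta iota delta [co eqn]; solver | cases_lin l' solver]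
 end.

Ltac lin K l solver := lazymatch goal with |- ?L = ?R =>
  let u := reifyl K l L in let v := reifyl K l R in
  change (ev (fun n => nth 0 l n) u = ev (fun n => nth 0 l n) v) end;
  apply: (@ev_eq _ _ _ (size l));
  [ by move=> ? hj; rewrite nth_default
  | cases_lin l solver ].

Set Implicit Arguments. Unset Strict Implicit.

Ltac atom_idx a b e f t := lazymatch t with
 | 1 => constr:(0%N) | a => constr:(1%N) | b => constr:(2%N) | e => constr:(3%N) | f => constr:(4%N)
 | a * b * a => constr:(7%N) | b * e * b => constr:(14%N)
 | a * b => constr:(5%N) | b * a => constr:(6%N) | a * f => constr:(8%N) | f * a => constr:(9%N)
 | e * b => constr:(10%N) | b * e => constr:(11%N) | e * f => constr:(12%N) | f * e => constr:(13%N)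
 end.

Ltac reify K a b e f t := lazymatch t with
 | ?x + ?y => let u := reify K a b e f x in let v := reify K a b e f y in constr:(LD u v)
 | - ?x => let u := reify K a b e f x in constr:(LN u)
 | ?c *: ?x => let u := reify K a b e f x in constr:(LS c u)
 | 0 => constr:(@LZ K)
 | _ => let n := atom_idx a b e f t in constr:(@LA K n)
 end.

Definition Xe (K : fieldType) (A : algType K) (q r : K) (g E : A) (P : K) : A :=
  ((P - P^-1) / (q - q^-1)) *: g - P *: 1 + ((P - P^-1) / (1 + r * (q / P ^+ 2))) *: E.

Arguments Xe {K A}.

Lemma yb_gen (K : fieldType) (A : algType K) (a b e f : A) (q r Q H s x : K)
 (nq : q != 0) (nr : r != 0) (ns : q * q - 1 != 0) (nQ : Q != 0) (nH : H != 0)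
 (n1 : Q^+2 + r * q != 0) (n2 : H^+2 + r * q != 0) (n3 : (Q*H)^+2 + r * q != 0)
 (hs : s = q - q^-1) (hx : x = 1 + (r - r^-1) / s)
 (raa : a * a = 1 + s *: a - (s / r) *: e)
 (rbb : b * b = 1 + s *: b - (s / r) *: f)
 (rae : a * e = r^-1 *: e) (rea : e * a = r^-1 *: e)
 (rbf : b * f = r^-1 *: f) (rfb : f * b = r^-1 *: f)
 (ree : e * e = x *: e) (rff : f * f = x *: f)
 (rbab : b * a * b = a * b * a)
 (rabe : a * b * e = f * e) (rbaf : b * a * f = e * f)
 (reba : e * b * a = e * f) (rfab : f * a * b = f * e)
 (rebe : e * b * e = r *: e) (rfaf : f * a * f = r *: f)
 (refe : e * f * e = e) (rfef : f * e * f = f)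
 (rafe : a * f * e = b * e + s *: (f * e) - s *: e)
 (rbef : b * e * f = a * f + s *: (e * f) - s *: f)
 (refa : e * f * a = e * b + s *: (e * f) - s *: e)
 (rfeb : f * e * b = f * a + s *: (f * e) - s *: f)
 (rafa : a * f * a = b * e * b - s *: (e * b) + s *: (f * a) + s *: (a * f) - s *: (b * e)
            + (s*s) *: e - (s*s) *: f) :
 Xe q r a e Q * Xe q r b f (Q*H) * Xe q r a e H = Xe q r b f H * Xe q r a e (Q*H) * Xe q r b f Q.
Proof.
rewrite /Xe -!scaleNr.
set c1 := (Q - Q^-1) / (q - q^-1). set c2 := (Q * H - (Q * H)^-1) / (q - q^-1).
set c3 := (H - H^-1) / (q - q^-1).
set g1 := (Q - Q^-1) / _. set g2 := (Q * H - (Q * H)^-1) / _. set g3 := (H - H^-1) / _.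
set d1 := - Q. set d2 := - (Q * H). set d3 := - H.
rewrite !(@mulrDl A, @mulrDr A).
rewrite !(=^~ (@scalerAl K A), =^~ (@scalerAr K A), (@scalerA K A), (@mul1r A), (@mulr1 A)).
rewrite ?raa ?rbb ?rae ?rea ?rbf ?rfb ?ree ?rff ?rbab ?rabe ?rbaf ?reba ?rfab ?rebe ?rfaf ?refe ?rfef
  ?rafe ?rbef ?refa ?rfeb ?rafa.

set w := fun n => nth 0 [:: 1; a; b; e; f; a*b; b*a; a*b*a; a*f; f*a; e*b; b*e; e*f; f*e; b*e*b] n.
lazymatch goal with |- ?L = ?R =>
  let u := reify K a b e f L in let v := reify K a b e f R in change (ev w u = ev w v) end.
apply: (@ev_eq _ _ _ 15); first by move=> j hj; rewrite /w nth_default.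
move=> i hi.
do 15 (case: i hi => [_|i hi]; [cbv beta iota delta [co eqn]; rewrite /c1 /c2 /c3 /g1 /g2 /g3 /d1 /d2 /d3 hx hs; field; by rewrite ?nq ?nr ?ns ?nQ ?nH ?n1 ?n2 ?n3|]).
by [].
Qed.

Lemma quad (K : fieldType) (A : algType K) (a ai e : A) (s r : K)
  (ha2 : ai * a = 1) (ha3 : a - ai = s *: (1 - e)) (hea : e * a = r^-1 *: e) :
  a * a = 1 + s *: a - (s / r) *: e.
Proof.
rewrite -[a * a](subrK (ai * a)) -mulrBl ha3 ha2 -scalerAl mulrBl mul1r hea.
lin K ([:: 1; a; e]) ltac:(ring).
Qed.

Lemma der_eba (K : fieldType) (A : algType K) (a e b f : A) (s r x : K)
  (nr : r != 0) (ns : s != 0) (nD : r^-1 * r^-1 - 1 - s / r != 0)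
  (hx : x = 1 + (r - r^-1) / s)
  (hbb : b * b = 1 + s *: b - (s / r) *: f)
  (hea : e * a = r^-1 *: e) (hee : e * e = x *: e)
  (hbab : b * (a * b) = a * (b * a)) (hbaf : b * (a * f) = e * f) :
  e * (b * a) = e * f.
Proof.
set X := e * (b * a).
have hXb : X * b = r^-1 *: X.
  by rewrite /X -!mulrA hbab !mulrA hea -!scalerAl.
have hXf : X * f = x *: (e * f).
  by rewrite /X -!mulrA hbaf mulrA hee -scalerAl.
have h1 : X * (b * b) = (r^-1 * r^-1) *: X.
  by rewrite mulrA hXb -scalerAl hXb scalerA.
have h2 : X * (b * b) = X + s *: (X * b) - (s / r) *: (X * f).
  by rewrite hbb !(mulrDr, mulrN) mulr1 -!scalerAr.
rewrite hXb hXf h1 in h2.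
have h4 : (r^-1 * r^-1) *: X - (X + s *: (r^-1 *: X) - (s / r) *: (x *: (e * f))) = 0.
  by rewrite {1}h2 subrr.
apply: (scalerI nD); apply/subr0_eq; rewrite -h4.
lin K [:: X; e * f] ltac:(rewrite hx; field; by rewrite ?ns ?nr).
Qed.

Lemma der_afe (K : fieldType) (A : algType K) (a e b f : A) (s r : K) (nr : r != 0)
  (haa : a * a = 1 + s *: a - (s / r) *: e)
  (habe : a * (b * e) = f * e) (hebe : e * (b * e) = r *: e) :
  a * (f * e) = b * e + s *: (f * e) - s *: e.
Proof.
rewrite -{1}habe mulrA haa !(mulrDl, mulNr) mul1r -!scalerAl habe hebe.
lin K [:: b * e; f * e; e] ltac:(field; by rewrite ?nr).
Qed.

Lemma der_efa (K : fieldType) (A : algType K) (a e b f : A) (s r : K) (nr : r != 0)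
  (haa : a * a = 1 + s *: a - (s / r) *: e)
  (heba : e * (b * a) = e * f) (hebe : e * (b * e) = r *: e) :
  e * (f * a) = e * b + s *: (e * f) - s *: e.
Proof.
rewrite mulrA -{1}heba -!mulrA haa !(mulrDr, mulrN) mulr1 -!scalerAr heba hebe.
lin K [:: e * b; e * f; e] ltac:(field; by rewrite ?nr).
Qed.

Lemma der_afa (K : fieldType) (A : algType K) (a e b bi f : A) (s r : K)
  (hb2 : bi * b = 1) (hb3 : b - bi = s *: (1 - f))
  (hbaf : b * (a * f) = e * f)
  (hefa : e * (f * a) = e * b + s *: (e * f) - s *: e)
  (hbef : b * (e * f) = a * f + s *: (e * f) - s *: f)
  (hfeb : f * (e * b) = f * a + s *: (f * e) - s *: f)
  (hfef : f * (e * f) = f) :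
  a * (f * a) = b * (e * b) - s *: (e * b) + s *: (f * a) + s *: (a * f) - s *: (b * e)
     + (s * s) *: e - (s * s) *: f.
Proof.
have h : b * (a * (f * a)) = e * (f * a) by rewrite (mulrA a) mulrA hbaf -mulrA.
have hbi : bi = b - s *: (1 - f) by rewrite -hb3 opprB addrC subrK.
rewrite -[a * (f * a)]mul1r -hb2 -mulrA h hefa hbi.
rewrite !(mulrDl, mulNr, mulrDr, mulrN) -!scalerAl -!scalerAr !(mulrDl, mulNr) !mul1r.
rewrite hbef hfeb hfef.
lin K [:: b * (e * b); e * b; f * a; a * f; b * e; e; f; e * f; f * e] ltac:(ring).
Qed.

Lemma tofrac_neq0 (p : {poly {poly rat}}) (c : {poly rat}) (d : rat) :
  (p.[c]).[d] != 0 -> tofrac p != (0 : Kf).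
Proof.
by move=> h; rewrite tofrac_eq0; apply: contraNneq h => ->; rewrite !horner0.
Qed.

Lemma qq_neq0 : qq != 0.
Proof. apply: (@tofrac_neq0 _ 0 1); rewrite hornerC hornerX; exact: oner_neq0. Qed.

Lemma rr_neq0 : rr != 0.
Proof. apply: (@tofrac_neq0 _ 1 1); rewrite hornerX hornerC; exact: oner_neq0. Qed.

Lemma qq2_neq0 : qq * qq - 1 != 0.
Proof.
have -> : qq * qq - 1 = tofrac (('X * 'X - 1)%:P).
  by rewrite /qq polyCB polyCM polyC1 tofracB tofracM tofrac1.
apply: (@tofrac_neq0 _ 0 0). rewrite hornerC !hornerE.
by rewrite oppr_eq0 oner_eq0.
Time Qed.

Lemma gen_ss (F : fieldType) (q : F) : q != 0 -> q * q - 1 != 0 -> q - q^-1 != 0.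
Proof.
move=> hq hq2; have -> : q - q^-1 = (q * q - 1) / q by field.
by rewrite mulf_neq0 ?invr_eq0.
Qed.

Lemma ss_neq0 : qq - qq^-1 != 0.
Proof. exact: gen_ss qq_neq0 qq2_neq0. Qed.

Lemma gen_D (F : fieldType) (q r : F) : q != 0 -> r != 0 ->
  q - r * r * q - (q * q - 1) * r != 0 -> r^-1 * r^-1 - 1 - (q - q^-1) / r != 0.
Proof.
move=> hq hr hne.
have -> : r^-1 * r^-1 - 1 - (q - q^-1) / r = (q - r * r * q - (q * q - 1) * r) / (r * r * q).
  by field; rewrite hq hr.
by rewrite mulf_neq0 // ?invr_eq0 ?mulf_neq0.
Qed.

Lemma D_neq0 : rr^-1 * rr^-1 - 1 - (qq - qq^-1) / rr != 0.
Proof.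
apply: (@gen_D Kf qq rr qq_neq0 rr_neq0).
have -> : qq - rr * rr * qq - (qq * qq - 1) * rr =
   tofrac ('X%:P - 'X * 'X * 'X%:P - ('X%:P * 'X%:P - 1) * 'X).
  by rewrite /qq /rr !(tofracB, tofracM) tofrac1.
apply: (@tofrac_neq0 _ 0 1); rewrite !hornerE; exact: oner_neq0.
Qed.

Lemma pw_neq0 k : (qq ^+ k) ^+ 2 + rr * qq != 0.
Proof.
have -> : (qq ^+ k) ^+ 2 + rr * qq = tofrac (('X ^+ k)%:P ^+ 2 + 'X * 'X%:P).
  by rewrite /qq /rr polyC_exp !(tofracD, tofracM, tofracXn).
apply: (@tofrac_neq0 _ 1 1); rewrite !hornerE !expr1n.
by rewrite Num.Theory.paddr_eq0 ?Num.Theory.ler01 // oner_eq0.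
Qed.

Lemma qpow k : qq ^ (1 - (2 * k)%:Z) = qq / (qq ^+ k) ^+ 2.
Proof.
rewrite expfzDr ?qq_neq0 // expr1z -exprM -exprnN mulnC.
reflexivity.
Qed.


Lemma scal3 (K : fieldType) (A : algType K) (al be ga : K) (X1 X2 X3 Y1 Y2 Y3 : A) :
  X1 * X2 * X3 = Y1 * Y2 * Y3 ->
  (al *: X1) * (be *: X2) * (ga *: X3) = (ga *: Y1) * (be *: Y2) * (al *: Y3).
Proof.
move=> h; rewrite -!scalerAl -!scalerAr -!scalerAl !scalerA h; congr (_ *: _); ring.
Qed.

Lemma Y_X (A : algType Kf) (T E : nat -> A) i k :
  Y T E i k = (- (qint k.+1)^-1) *: Xe qq rr (T i) (E i) (qq ^+ k).
Proof. by rewrite /Y /Xe qpow. Qed.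

Lemma commrZ' (K : fieldType) (A : algType K) (x y : A) (c : K) :
  GRing.comm x y -> GRing.comm x (c *: y).
Proof. by rewrite /GRing.comm -scalerAr -scalerAl => ->. Qed.

Lemma comm_inv (K : fieldType) (A : algType K) (x y yi : A) :
  y * yi = 1 -> yi * y = 1 -> GRing.comm x y -> GRing.comm x yi.
Proof.
move=> h1 h2 h; rewrite /GRing.comm.
rewrite -[x * yi]mul1r -h2 -!mulrA (mulrA y) -h !mulrA -(mulrA _ y yi) h1 mulr1.
by [].
Qed.

Lemma e_expr (K : fieldType) (A : algType K) (a ai e : A) (s : K) :
  s != 0 -> a - ai = s *: (1 - e) -> e = 1 - s^-1 *: (a - ai).
Proof. by move=> ns ->; rewrite scalerA mulVf // scale1r opprB addrC subrK. Qed.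

Lemma comm_Xe (A : algType Kf) (u a e : A) (P c : Kf) :
  GRing.comm u a -> GRing.comm u e ->
  GRing.comm u (c *: Xe qq rr a e P).
Proof.
move=> ha he; rewrite /Xe; apply: commrZ'; apply: commrD; last exact: commrZ'.
apply: commrB; [exact: commrZ' | exact/commrZ'/commr1].
Qed.

Lemma comm_gen (A : algType Kf) (a ai e c ci g : A)
  (ha1 : a * ai = 1) (ha2 : ai * a = 1) (ha3 : a - ai = (qq - qq^-1) *: (1 - e))
  (hc1 : c * ci = 1) (hc2 : ci * c = 1) (hc3 : c - ci = (qq - qq^-1) *: (1 - g))
  (hac : a * c = c * a) :
  [/\ GRing.comm a c, GRing.comm a g, GRing.comm e c & GRing.comm e g].
Proof.
have ns := ss_neq0.
have Hac : GRing.comm a c by [].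
have Haci : GRing.comm a ci by apply: comm_inv hc1 hc2 Hac.
have Hca : GRing.comm c a by [].
have Hcai : GRing.comm c ai by apply: comm_inv ha1 ha2 Hca.
have Hcia : GRing.comm ci a by apply: commr_sym.
have Hciai : GRing.comm ci ai by apply: comm_inv ha1 ha2 Hcia.
have Hag : GRing.comm a g.
  rewrite (e_expr ns hc3); apply: commrB; first exact: commr1.
  by apply: commrZ'; apply: commrB.
have Haig : GRing.comm ai g.
  rewrite (e_expr ns hc3); apply: commrB; first exact: commr1.
  by apply: commrZ'; apply: commrB; apply: commr_sym.
have Hec : GRing.comm e c.
  rewrite (e_expr ns ha3); apply: commr_sym; apply: commrB; first exact: commr1.
  by apply: commrZ'; apply: commrB.
have Heg : GRing.comm e g.
  rewrite (e_expr ns ha3); apply: commr_sym; apply: commrB; first exact: commr1.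
  by apply: commrZ'; apply: commrB; apply: commr_sym.
split; by [].
Qed.

Theorem proposition3p2 (n : nat) (hn : (3 <= n)%N) (A : algType Kf)
  (T Ti E : nat -> A) (hB : bmw_rel n T Ti E) :
  (forall (k h i : nat), (1 <= i <= n - 2)%N ->
     Y T E i k * Y T E i.+1 (k + h) * Y T E i h
     = Y T E i.+1 h * Y T E i (k + h) * Y T E i.+1 k) /\
  (forall (k h i j : nat), (1 <= i <= n.-1)%N -> (1 <= j <= n.-1)%N ->
     (i.+1 < j)%N || (j.+1 < i)%N ->
     Y T E i k * Y T E j h = Y T E j h * Y T E i k).
Proof.
case: hB => h1 [h2 h3]; split.
- move=> k h i hi.
  have hi1 : (1 <= i <= n.-1)%N by lia.
  have hi2 : (1 <= i.+1 <= n.-1)%N by lia.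
  case: (h1 i hi1) => ha1 ha2 ha3 hee [hea hae].
  case: (h1 i.+1 hi2) => hb1 hb2 hb3 hff [hfb hbf].
  case: (h2 i hi) => hbr [hefe hfef] [habe hbaf] [hebe hfaf].
  rewrite !Y_X exprD; apply: scal3.
  move: (T i) (Ti i) (E i) (T i.+1) (Ti i.+1) (E i.+1) ha1 ha2 ha3 hee hea hae hb1 hb2 hb3 hff hfb hbf
     hbr hefe hfef habe hbaf hebe hfaf.
  move=> a ai e b bi f ha1 ha2 ha3 hee hea hae hb1 hb2 hb3 hff hfb hbf
     hbr hefe hfef habe hbaf hebe hfaf.
  have raa := quad ha2 ha3 hea.
  have rbb := quad hb2 hb3 hfb.
  have habe' : a * (b * e) = f * e by rewrite mulrA.
  have hbaf' : b * (a * f) = e * f by rewrite mulrA.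
  have hebe' : e * (b * e) = rr *: e by rewrite mulrA.
  have hfaf' : f * (a * f) = rr *: f by rewrite mulrA.
  have hbab' : b * (a * b) = a * (b * a) by rewrite !mulrA hbr.
  have hfef' : f * (e * f) = f by rewrite mulrA.
  have heba' := der_eba rr_neq0 ss_neq0 D_neq0 (erefl xx) rbb hea hee hbab' hbaf'.
  have hfab' := der_eba rr_neq0 ss_neq0 D_neq0 (erefl xx) raa hfb hff (esym hbab') habe'.
  have hafe' := der_afe rr_neq0 raa habe' hebe'.
  have hbef' := der_afe rr_neq0 rbb hbaf' hfaf'.
  have hefa' := der_efa rr_neq0 raa heba' hebe'.
  have hfeb' := der_efa rr_neq0 rbb hfab' hfaf'.
  have hafa' := der_afa rr hb2 hb3 hbaf' hefa' hbef' hfeb' hfef'.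
  apply: (yb_gen qq_neq0 rr_neq0 qq2_neq0 (expf_neq0 _ qq_neq0) (expf_neq0 _ qq_neq0)
            (pw_neq0 k) (pw_neq0 h) _ (erefl _) (erefl xx) raa rbb hae hea hbf hfb hee hff
            (esym hbr) habe hbaf _ _ hebe hfaf hefe hfef _ _ _ _ _).
  + by rewrite -exprD; exact: pw_neq0.
  + by rewrite -mulrA.
  + by rewrite -mulrA.
  + by rewrite -mulrA.
  + by rewrite -mulrA.
  + by rewrite -mulrA.
  + by rewrite -mulrA.
  + by rewrite -!mulrA.
- move=> k h i j hi hj hij.
  case: (h1 i hi) => ha1 ha2 ha3 _ _.
  case: (h1 j hj) => hc1 hc2 hc3 _ _.
  have hac := h3 i j hi hj hij.
  case: (comm_gen ha1 ha2 ha3 hc1 hc2 hc3 hac) => Hac Hag Hec Heg.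
  rewrite !Y_X.
  apply: comm_Xe; apply: commr_sym; apply: comm_Xe; exact: commr_sym.
Qed.
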